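(* Let $c$ be a $k$-valued function on $S$ with finite non-empty support (and not identically zero). Then there exist $X\in\mathfrak{gl}_\infty(k)$ and $Y\in\mathfrak{gl}_\infty(\mathcal U_1)$ such that $\sum_{w\in S}c(w)\,\mathrm{Tr}(w(X,Y))\neq0$.
   Context: $k$ has characteristic $0$. $\mathcal U=k[u_1,u_2,\dots]$ is the free graded-commutative algebra on countably many generators $u_i$ of homological degree $1$, and $\mathcal U_1$ its degree-$1$ part. $\mathfrak{gl}_\infty(B)=\varinjlim_n\mathbb M_n(B)$ denotes finite matrices. Consider the free graded algebra $k\langle x,y\rangle$ with $x$ of degree $0$ and $y$ of degree $1$; define $\tau(v_1\cdots v_n)=(-1)^{|v_n||v_1\cdots v_{n-1}|}v_nv_1\cdots v_{n-1}$ on words and $\mathrm N=1+\tau+\dots+\tau^{n-1}$ on words of length $n$. $S$ is a set consisting of one representative word for each cyclic word (class of words under cyclic permutation) $w$ of positive length with $\mathrm N(w)\neq0$; for $X,Y$ matrices, $w(X,Y)$ is obtained by substituting $X$ for $x$ and $Y$ for $y$. *)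

(* Defs.v *)
From HB Require Import structures.
From mathcomp Require Import all_boot all_order all_algebra.
Set Implicit Arguments. Unset Strict Implicit. Unset Printing Implicit Defensive.
Import GRing.Theory.
Local Open Scope ring_scope.

(* The free graded-commutative algebra U = k[u_0, u_1, ...] on countably   *)
(* many generators of degree 1 (i.e. the exterior algebra).  An element    *)
(* is encoded by its coefficient function on monomials u_{i1}...u_{ir},    *)
(* a monomial being given by a strictly increasing list [i1;...;ir] of     *)
(* naturals.  Values on non strictly increasing lists are irrelevant       *)
(* (the operations below never produce non-zero values there).             *)
Definition Uel (k : fieldType) := seq nat -> k.

Definition Uzero (k : fieldType) : Uel k := fun _ => 0.
Definition Uone (k : fieldType) : Uel k := fun C => (C == [::])%:R.
Definition Uscal (k : fieldType) (a : k) : Uel k := fun C => if C == [::] then a else 0.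
Definition Uadd (k : fieldType) (f g : Uel k) : Uel k := fun C => f C + g C.

(* sign of u_A u_B = +- u_C when C = A |_| B, with A selected by the mask m:
   (-1)^(number of pairs i < j with C_i in B and C_j in A) *)
Definition mask_sign (k : fieldType) (r : nat) (m : r.-tuple bool) : k :=
  (-1) ^+ (\sum_(i < r) \sum_(j < r) ((i < j)%N && ~~ tnth m i && tnth m j)).

Definition Umul (k : fieldType) (f g : Uel k) : Uel k := fun C =>
  if sorted ltn C then
    \sum_(m : (size C).-tuple bool)
       @mask_sign k _ m * f (mask m C) * g (mask (map negb m) C)
  else 0.

(* degree-one part U_1: linear combinations of finitely many generators *)
Definition in_U1 (k : fieldType) (f : Uel k) : Prop :=
  (forall C, f C != 0 -> size C = 1%N) /\
  (exists N, forall a, (N <= a)%N -> f [:: a] = 0).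

Definition UM (k : fieldType) (n : nat) := 'I_n -> 'I_n -> Uel k.

Definition UMmul (k : fieldType) (n : nat) (A B : UM k n) : UM k n :=
  fun i j C => \sum_(l < n) Umul (A i l) (B l j) C.

Definition UMone (k : fieldType) (n : nat) : UM k n :=
  fun i j => if i == j then @Uone k else @Uzero k.

Definition UMofk (k : fieldType) (n : nat) (X : 'M[k]_n) : UM k n :=
  fun i j => Uscal (X i j).

Definition UMtr (k : fieldType) (n : nat) (A : UM k n) : Uel k :=
  fun C => \sum_(i < n) A i i C.

(* words in k<x,y>: false = x (degree 0), true = y (degree 1) *)
Definition word := seq bool.

Definition weval (k : fieldType) (n : nat) (X : 'M[k]_n) (Y : UM k n)
    (w : word) : UM k n :=
  foldr (fun (a : bool) M => UMmul (if a then Y else UMofk X) M) (@UMone k n) w.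

(* tau acting on a signed word (s * w):
   tau(v1...vn) = (-1)^(|vn| |v1...v(n-1)|) vn v1 ... v(n-1) *)
Definition tau_sw (k : fieldType) (sw : k * word) : k * word :=
  let: (s, w) := sw in
  match lastP w with
  | LastNil => (s, w)
  | LastRcons p a => (s * (-1) ^+ (a * count id p), a :: p)
  end.

(* coefficient of the word v in N(w) = (1 + tau + ... + tau^(n-1)) w *)
Definition Ncoef (k : fieldType) (w v : word) : k :=
  \sum_(j < size w)
     let sw := iter j (@tau_sw k) (1, w) in
     if sw.2 == v then sw.1 else 0.

Definition N_nonzero (k : fieldType) (w : word) : Prop :=
  exists v, @Ncoef k w v != 0.

Definition cyc_equiv (w v : word) : Prop := exists j, rot j w = v.

Definition is_rep_set (k : fieldType) (S : word -> Prop) : Prop :=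
  [/\ (forall s, S s -> (0 < size s)%N /\ @N_nonzero k s),
      (forall w, (0 < size w)%N -> @N_nonzero k w -> exists s, S s /\ cyc_equiv w s)
    & (forall s1 s2, S s1 -> S s2 -> cyc_equiv s1 s2 -> s1 = s2)].

(* Main.v *)
Require Import Defs.
From HB Require Import structures.
From mathcomp Require Import all_boot all_order all_algebra zify ring.
Set Implicit Arguments. Unset Strict Implicit. Unset Printing Implicit Defensive.
Import GRing.Theory.
Local Open Scope ring_scope.

Lemma mask_idx (C : seq nat) (m : seq bool) : uniq C ->
  mask m C = filter (fun x => nth false m (index x C)) C.
Proof.
move=> U; rewrite {1}(mask_filter m U); apply: eq_in_filter => x xC.
by rewrite in_mask // xC.
Qed.

Lemma sum_lt_ord n k : (\sum_(i < n) (i < k)%N)%N = minn n k.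
Proof.
elim: n => [|n IH]; first by rewrite big_ord0 min0n.
rewrite big_ord_recr /= IH; case: (ltnP n k) => h /=; lia.
Qed.

Section U.
Variable k : fieldType.

Definition mono1 (a : nat) : Uel k := fun C => (C == [:: a])%:R.

Lemma sortedU (C : seq nat) : sorted ltn C -> uniq C.
Proof. by apply: sorted_uniq; [exact: ltn_trans | exact: ltnn]. Qed.

Lemma Umul_scal (a : k) (g : Uel k) C :
  Umul (Uscal a) g C = if sorted ltn C then a * g C else 0.
Proof.
rewrite /Umul; case: ifP => // sC; have U := sortedU sC.
pose m0 := nseq_tuple (size C) false.
rewrite (bigD1 m0) //= big1 ?addr0.
  rewrite /mask_sign big1 ?expr0 ?mul1r; last first.
    by move=> i _; rewrite big1 // => j _; rewrite !tnth_nseq; rewrite andbF.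
  by rewrite mask_false /Uscal /= map_nseq mask_true.
move=> m /= Hm; rewrite /Uscal; case: eqP => [E|_]; last by rewrite mulr0 mul0r.
case/eqP: Hm; apply/val_inj/(@eq_from_nth _ false); first by rewrite !size_tuple.
move=> i; rewrite size_tuple => iC /=; rewrite nth_nseq iC.
move: E; rewrite mask_idx // => E; have /hasPn H : ~~ has (fun x => nth false m (index x C)) C by rewrite has_filter E.
have := H _ (mem_nth 0 iC); rewrite index_uniq //; by case: (nth _ _ _).
Qed.

Lemma Umul_gen (a : nat) (g : Uel k) C :
  Umul (mono1 a) g C =
  if sorted ltn C && (a \in C) then (-1) ^+ (index a C) * g (rem a C) else 0.
Proof.
rewrite /Umul; case sC: (sorted ltn C) => //=; have U := sortedU sC.
case aC: ((a : nat) \in C); last first.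
  rewrite big1 // => m _; rewrite /mono1; case: eqP; last by rewrite mulr0 mul0r.
  by move=> E; have := @mem_mask _ a m C; rewrite E inE eqxx aC => /(_ isT).
have ilt : (index a C < size C)%N by rewrite index_mem.
pose m0s := mkseq (fun i => i == index a C) (size C).
have sm0 : size m0s == size C by rewrite size_mkseq.
pose m0 : (size C).-tuple bool := Tuple sm0.
have nm0 j : (j < size C)%N -> nth false m0s j = (j == index a C).
  by move=> jC; rewrite nth_mkseq.
have idxE x : x \in C -> (index x C == index a C) = (x == a).
  move=> xC; apply/eqP/eqP => [E|->//].
  by rewrite -(nth_index 0 xC) E nth_index.
rewrite (bigD1 m0) //= big1 ?addr0.
  have -> : mask m0 C = [:: a].
    rewrite mask_idx //= -(filter_pred1_uniq U aC); apply: eq_in_filter => x xC.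
    by rewrite nm0 ?index_mem // idxE.
  have -> : mask (map negb m0) C = rem a C.
    rewrite mask_idx //= rem_filter //; apply: eq_in_filter => x xC.
    have ix : (index x C < size C)%N by rewrite index_mem.
    rewrite (nth_map false) ?size_mkseq // nm0 // idxE //.
  rewrite /mono1 eqxx mulr1; congr (_ * _); rewrite /mask_sign; congr (_ ^+ _).
  rewrite -[X in _ = X](minn_idPr (ltnW ilt)) -sum_lt_ord; apply: eq_bigr => i _.
  rewrite (bigD1 (Ordinal ilt)) //= big1 ?addn0.
    rewrite !(tnth_nth false) /= !nm0 // eqxx andbT.
    by case: ltngtP.
  move=> j /negbTE jn; rewrite !(tnth_nth false) /= !nm0 //.
  by move: jn; rewrite -val_eqE /= => ->; rewrite andbF.
move=> m /= Hm; rewrite /mono1; case: eqP => [E|_]; last by rewrite mulr0 mul0r.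
case/eqP: Hm; apply/val_inj/(@eq_from_nth _ false); first by rewrite !size_tuple.
move=> i; rewrite size_tuple => iC /=; rewrite nm0 //.
have xC := mem_nth 0 iC.
move: E; rewrite mask_idx // => E.
have := mem_filter (fun x => nth false m (index x C)) (nth 0 C i) C.
rewrite E xC andbT inE /= index_uniq // => <-.
by rewrite -idxE // index_uniq.
Qed.

Lemma Umul_zero (f g : Uel k) C : (forall D, f D = 0) -> Umul f g C = 0.
Proof.
move=> H; rewrite /Umul; case: ifP => // _; rewrite big1 // => m _.
by rewrite H mulr0 mul0r.
Qed.

End U.

Section T.
Variable k : fieldType.

Lemma tau_rcons (s : k) p (a : bool) :
  tau_sw (s, rcons p a) = (s * (-1) ^+ (a * count id p), a :: p).
Proof.
rewrite /tau_sw; move E: (rcons p a) => w; case: lastP E => [|p' a'] E.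
  by case: p E.
by case/rcons_inj: E => -> ->.
Qed.

Lemma sign_eq (x y a : nat) :
  (-1) ^+ ((x + a) * y) * (-1) ^+ (a * (y + x)) = (-1) ^+ (x * (a + y)) :> k.
Proof.
have E : ((x + a) * y + a * (y + x) = x * (a + y) + (a * y) * 2)%N by ring.
by rewrite -exprD E exprD (exprM _ (a * y)%N 2) sqrr_sign mulr1.
Qed.

Lemma iter_tau (w : word) j : (j <= size w)%N ->
  iter j (@tau_sw k) (1, w) =
  ((-1) ^+ (count id (take (size w - j) w) * count id (drop (size w - j) w)),
   rotr j w).
Proof.
elim: j => [|j IH] hj.
  by rewrite /= subn0 drop_size /= muln0 expr0 /rotr subn0 rot_size.
rewrite iterS IH ?(ltnW hj) //.
set n := (size w - j.+1)%N.
have hn : (size w - j = n.+1)%N by rewrite /n; lia.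
have nlt : (n < size w)%N by rewrite /n; lia.
rewrite hn (take_nth false nlt).
have -> : rotr j w = rcons (drop n.+1 w ++ take n w) (nth false w n).
  by rewrite /rotr hn /rot (take_nth false nlt) rcons_cat.
rewrite tau_rcons /rotr -/n /rot (drop_nth false nlt); congr (_, _).
rewrite -cats1 !count_cat /=.
by rewrite addn0 sign_eq.
Qed.

End T.

Fixpoint inv (s : seq nat) : nat :=
  if s is x :: s' then (count (fun y => y < x) s' + inv s')%N else 0%N.

Lemma index_count (C : seq nat) a : sorted ltn C -> a \in C ->
  index a C = count (fun y => y < a)%N C.
Proof.
elim: C => [//|x C IH] /= sC; rewrite inE.
have allx := order_path_min ltn_trans sC.
case: eqP => [-> _ /=|ne aC].
  rewrite eqxx ltnn /= (@eq_in_count _ _ pred0) ?count_pred0 // => y yC.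
  move/allP: allx => /(_ y yC) h; have h' : (x < y)%N := h; apply/negP => h2; lia.
have xa : (x < a)%N by move/allP: allx => /(_ a aC).
have /negbTE -> : x != a by apply/eqP => E; apply: ne; rewrite E.
by rewrite xa IH ?(path_sorted sC).
Qed.

Lemma inv_cat (s1 s2 : seq nat) : sorted ltn s1 ->
  (forall x y, x \in s1 -> y \in s2 -> y < x)%N ->
  inv (s1 ++ s2) = (size s1 * size s2 + inv s2)%N.
Proof.
elim: s1 => [//|x s1 IH] /= sC H.
have allx := order_path_min ltn_trans sC.
rewrite IH ?(path_sorted sC) //; last by move=> a b a1 b2; apply: H; rewrite // inE a1 orbT.
rewrite count_cat.
have -> : count (fun y => y < x)%N s1 = 0%N.
  rewrite (@eq_in_count _ _ pred0) ?count_pred0 // => y yC.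
  move/allP: allx => /(_ y yC) h; have h' : (x < y)%N := h; apply/negP => h2; lia.
have -> : count (fun y => y < x)%N s2 = size s2.
  apply/eqP; rewrite -all_count; apply/allP => y ys; apply: H => //; exact: mem_head.
lia.
Qed.

Lemma inv_sorted (s : seq nat) : sorted ltn s -> inv s = 0%N.
Proof. by move=> ss; rewrite -[s]cats0 inv_cat //= muln0. Qed.


Lemma rot_map (T : Type) (x0 : T) (s : seq T) a : (a < size s)%N ->
  [seq nth x0 s ((a + t) %% size s) | t <- iota 0 (size s)] = rot a s.
Proof.
move=> ha; apply: (@eq_from_nth _ x0); first by rewrite size_map size_iota size_rot.
move=> i; rewrite size_map size_iota => hi.
rewrite (nth_map 0%N) ?size_iota // nth_iota // add0n /rot nth_cat size_drop.
case: ltnP => h.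
  by rewrite nth_drop modn_small //; lia.
rewrite nth_take; last by lia.
have -> : (a + i = (i - (size s - a)) + size s)%N by lia.
by rewrite modnDr modn_small //; lia.
Qed.

Lemma countv_drop (s : seq bool) n :
  count id (drop n s) = count (nth false s) (drop n (iota 0 (size s))).
Proof. by rewrite -{1}(mkseq_nth false s) /mkseq -map_drop count_map. Qed.
Lemma countv_take (s : seq bool) n :
  count id (take n s) = count (nth false s) (take n (iota 0 (size s))).
Proof. by rewrite -{1}(mkseq_nth false s) /mkseq -map_take count_map. Qed.

Section Cyc.
Variable k : fieldType.
Variable v : word.
Local Notation m := (size v).
Hypothesis hm : (0 < m)%N.
Local Open Scope nat_scope.

Definition lab (i : nat) := nth false v (i %% m).
Definition succ (a : 'I_m) : 'I_m := Ordinal (ltn_pmod a.+1 hm).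

Definition Xm : 'M[k]_m := \matrix_(i, j) (if (j == succ i) && ~~ lab i then 1%R else 0%R).
Definition Ym : UM k m := fun i j => if (j == succ i) && lab i then mono1 k i else @Uzero k.

Fixpoint okw (u : word) (a : nat) : bool :=
  if u is x :: u' then (x == lab a) && okw u' a.+1 else true.
Fixpoint Ew (a L : nat) : seq nat :=
  if L is L'.+1 then (if lab a then [:: (a %% m)%N] else [::]) ++ Ew a.+1 L' else [::].

Definition Wf (u : word) (a b : 'I_m) (C : seq nat) : k :=
  if [&& val b == ((a + size u) %% m)%N, okw u a, sorted ltn C & perm_eq C (Ew a (size u))]
  then ((-1) ^+ (inv (Ew a (size u))))%R else 0%R.

Lemma lab_mod a a' : a %% m = a' %% m -> lab a = lab a'.
Proof. by rewrite /lab => ->. Qed.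

Lemma okw_mod u a a' : a %% m = a' %% m -> okw u a = okw u a'.
Proof.
elim: u a a' => [//|x u IH] a a' /= E; rewrite (lab_mod E) (IH a.+1 a'.+1) //.
by rewrite -addn1 -modnDml E modnDml addn1.
Qed.

Lemma Ew_mod L a a' : a %% m = a' %% m -> Ew a L = Ew a' L.
Proof.
elim: L a a' => [//|L IH] a a' /= E; rewrite (lab_mod E) E (IH a.+1 a'.+1) //.
by rewrite -addn1 -modnDml E modnDml addn1.
Qed.

Lemma weval_eq u a b C : weval Xm Ym u a b C = Wf u a b C.
Proof.
elim: u a b C => [|x u IH] a b C.
  rewrite /= /UMone /Wf /= addn0 modn_small //.
  case: (eqVneq a b) => [->|ne]; last by rewrite val_eqE eq_sym (negbTE ne).
  rewrite eqxx /Uone; case: C => [|y C]; first by rewrite /= expr0.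
  by case: ifP => // /and3P[_ _ P]; move: (perm_size P).
rewrite /= /UMmul (bigD1 (succ a)) //= big1 ?addr0; last first.
  move=> l /negbTE ne; apply: Umul_zero => D; case: x; rewrite /Ym /UMofk /Xm ?mxE ne //=.
  by rewrite /Uscal; case: ifP.
have Es : ((succ a + size u) %% m = (a + (size u).+1) %% m)%N.
  by rewrite /= modnDml addSnnS.
have Eo : okw u (succ a) = okw u a.+1 by apply: okw_mod; rewrite modn_mod.
have EE : Ew (succ a) (size u) = Ew a.+1 (size u) by apply: Ew_mod; rewrite modn_mod.
rewrite /Wf /= (modn_small (ltn_ord a)) -/(Wf u).
case: x; case La: (lab a) => /=.
- rewrite /Ym eqxx La /= Umul_gen IH /Wf Es Eo EE.
  set E' := Ew a.+1 (size u).
  case sC: (sorted ltn C); last by rewrite /= !andbF.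
  have srt : sorted ltn (rem (a : nat) C) by apply: subseq_sorted (rem_subseq (a : nat) C) sC; exact: ltn_trans.
  case aC: ((a : nat) \in C); last first.
    rewrite /=; case: ifP => // /and3P[_ _ P]; move: aC; rewrite (perm_mem P) inE eqxx.
    by [].
  have key : perm_eq C ((a : nat) :: E') = perm_eq (rem (a : nat) C) E'.
    by rewrite (permPl (perm_to_rem aC)) perm_cons.
  rewrite key srt /=.
  case: ifP => [/and3P[_ _ P]|_]; last by rewrite mulr0.
  rewrite exprD (index_count sC aC).
  by rewrite (permP (etrans key P)) /= ltnn.
- by rewrite Umul_zero ?andbF // => D; rewrite /Ym eqxx La.
- by rewrite Umul_zero ?andbF // => D; rewrite /UMofk /Xm mxE eqxx La /Uscal; case: ifP.
- rewrite /UMofk /Xm mxE eqxx La /= Umul_scal IH /Wf Es Eo EE.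
  by case: (sorted ltn C); rewrite ?mul1r ?andbF.
Qed.


Definition Cv := [seq i <- iota 0 m | nth false v i].

Lemma okw_map u a : okw u a = (u == [seq lab (a + t) | t <- iota 0 (size u)]).
Proof.
elim: u a => [//|x u IH] a /=; rewrite eqseq_cons IH addn0; congr (_ && (_ == _)).
rewrite (iotaDl 1 0) -map_comp; apply: eq_map => t /=; by rewrite add1n addSnnS.
Qed.

Lemma Ew_filter a L :
  Ew a L = [seq x <- [seq (a + t) %% m | t <- iota 0 L] | nth false v x].
Proof.
elim: L a => [//|L IH] a /=; rewrite IH addn0 /lab.
rewrite (iotaDl 1 0) -map_comp (@eq_map _ _ _ (fun t => (a.+1 + t) %% m)).
  by case: (nth false v (a %% m)).
by move=> t /=; rewrite add1n addSnnS.
Qed.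

Lemma Ew_rot (a : 'I_m) : Ew a m = [seq x <- rot a (iota 0 m) | nth false v x].
Proof.
rewrite Ew_filter; congr filter.
have := rot_map 0 (s := iota 0 m) (a := a); rewrite size_iota => <- //.
by apply: eq_map => t; rewrite nth_iota ?ltn_pmod.
Qed.

Lemma okw_rot u (a : 'I_m) : size u = m -> okw u a = (u == rot a v).
Proof.
move=> su; rewrite okw_map su; congr (_ == _).
by rewrite -(rot_map false) //; apply: eq_map.
Qed.


Lemma inv_Ew (a : 'I_m) :
  inv (Ew a m) = (count id (drop a v) * count id (take a v))%N.
Proof.
rewrite Ew_rot /rot filter_cat inv_cat.
- rewrite inv_sorted; last by apply: sorted_filter; [exact: ltn_trans | rewrite take_iota; exact: iota_ltn_sorted].
  by rewrite addn0 !size_filter countv_drop countv_take drop_iota take_iota.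
- apply: (sorted_filter ltn_trans); rewrite drop_iota; exact: iota_ltn_sorted.
- move=> x y; rewrite !mem_filter drop_iota take_iota !mem_iota => /andP[_ /andP[hx _]] /andP[_ /andP[_ hy]].
  rewrite add0n in hy; rewrite add0n in hx; have := ltn_ord a; lia.
Qed.

Lemma perm_Cv (a : 'I_m) : perm_eq Cv (Ew a m).
Proof. by rewrite Ew_rot /Cv perm_sym; apply: perm_filter; rewrite perm_rot. Qed.

Lemma sorted_Cv : sorted ltn Cv.
Proof. by apply: sorted_filter; [exact: ltn_trans | exact: iota_ltn_sorted]. Qed.

Lemma trace_full u : size u = m ->
  UMtr (weval Xm Ym u) Cv =
  (\sum_(a < m) (if u == rot a v then (-1) ^+ (count id (drop a v) * count id (take a v))%N else 0 : k))%R.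
Proof.
move=> su; rewrite /UMtr; apply: eq_bigr => a _.
rewrite weval_eq /Wf su okw_rot // sorted_Cv perm_Cv modnDr modn_small // eqxx andbT /=.
by rewrite andbT inv_Ew.
Qed.

Lemma trace_short u : (0 < size u < m)%N -> UMtr (weval Xm Ym u) Cv = 0%R.
Proof.
move=> /andP[h1 h2]; rewrite /UMtr big1 // => a _.
rewrite weval_eq /Wf; case: eqP => //= E.
have : (a + size u == a + 0 %[mod m])%N by rewrite addn0 -E modn_small.
rewrite eqn_modDl mod0n modn_small //; lia.
Qed.

Lemma Ncoef_trace w : size w = m -> Ncoef k w v = UMtr (weval Xm Ym w) Cv.
Proof.
move=> sw; rewrite trace_full // /Ncoef.
rewrite -(big_mkord xpredT (fun j => let sw := iter j (@tau_sw k) (1%R, w) in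
                  if sw.2 == v then sw.1 else 0%R)).
rewrite -(big_mkord xpredT (fun a => if w == rot a v
   then ((-1) ^+ (count id (drop a v) * count id (take a v))%N)%R else 0%R)) sw.
apply: eq_big_nat => j /andP[_ hj] /=.
rewrite iter_tau /=; last by rewrite sw ltnW.
have -> : (rotr j w == v) = (w == rot j v).
  by apply/eqP/eqP => [<-|->]; rewrite ?rotrK ?rotK.
case: eqP => // ->.
rewrite size_rot /rot take_size_cat ?drop_size_cat ?size_drop // mulnC.
Qed.

End Cyc.

Theorem mainTheorem20 (k : fieldType) (Hchar : [pchar k] =i pred0)
    (S : word -> Prop) (HS : is_rep_set k S)
    (c : word -> k) (supp : seq word)
    (Hc_dom : forall w, c w != 0 -> S w)
    (Hsupp_uniq : uniq supp)
    (Hsupp : forall w, c w != 0 -> w \in supp)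
    (Hnz : exists w, c w != 0) :
  exists (n : nat) (X : 'M[k]_n) (Y : UM k n),
    (forall i j, in_U1 (Y i j)) /\
    exists C : seq nat,
      \sum_(w <- supp) c w * UMtr (weval X Y w) C != 0.
Proof.
case: HS => HS1 HS2 HS3.
pose P n := has (fun w => (c w != 0) && (size w == n)) supp.
have exP : exists n, P n.
  case: Hnz => w0 h0; exists (size w0); apply/hasP; exists w0; first exact: Hsupp.
  by rewrite h0 eqxx.
have ubP : forall n, P n -> (n <= \max_(x <- supp) size x)%N.
  by move=> n /hasP[x xs /andP[_ /eqP <-]]; exact: (@leq_bigmax_seq _ supp xpredT size x xs isT).
case: (ex_maxnP exP ubP) => M /hasP[w ws /andP[cw /eqP sw]] Mmax.
have Sw := Hc_dom w cw.
have [wpos [v Nv]] := HS1 w Sw.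
have [j jlt Ev] : exists2 j, (j < size w)%N & rotr j w = v.
  case: (boolP (has (fun j => rotr j w == v) (iota 0 (size w)))) => [/hasP[j]|/hasPn H].
    by rewrite mem_iota add0n => /andP[_ hj] /eqP E; exists j.
  case/eqP: Nv; rewrite /Ncoef big1 // => i _ /=.
  rewrite iter_tau /= ?(ltnW (ltn_ord i)) //.
  by rewrite (negbTE (H i _)) // mem_iota add0n ltn_ord.
have sv : size v = size w by rewrite -Ev size_rotr.
have hm : (0 < size v)%N by rewrite sv.
exists (size v), (@Xm k v hm), (@Ym k v hm); split.
  move=> i j0; rewrite /Ym; case: ifP => _.
    split.
      by move=> C; rewrite /mono1; case E: (C == [:: (i : nat)]); [rewrite (eqP E) | rewrite eqxx].
    exists i.+1 => a ha; rewrite /mono1; case: eqP => // -[E].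
    by move: ha; rewrite E ltnn.
  split; first by move=> C; rewrite /Uzero eqxx.
  by exists 0%N.
exists (Cv v).
rewrite (bigD1_seq w) //= big_seq_cond big1 ?addr0.
  rewrite -Ncoef_trace; last by rewrite sv.
  by rewrite mulf_neq0.
move=> u /andP[us ne].
case cu: (c u == 0); first by rewrite (eqP cu) mul0r.
have Su := Hc_dom u (negbT cu).
have [upos _] := HS1 u Su.
have sule : (size u <= size w)%N.
  by rewrite sw; apply: Mmax; apply/hasP; exists u => //; rewrite cu eqxx.
case: (ltngtP (size u) (size w)) => hu.
- by rewrite trace_short ?mulr0 // upos sv.
- by move: sule; rewrite leqNgt hu.
rewrite trace_full; last by rewrite sv.
rewrite big1 ?mulr0 // => a _; case: eqP => // Eu.
have cyc : cyc_equiv u w.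
  exists (rot_add u (size u - a) j).
  by rewrite -rot_rot_add -/(rotr a u) Eu rotK -Ev rotrK.
by move: ne; rewrite (HS3 u w Su Sw cyc) eqxx.
Qed.
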